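(* Let $\mathfrak X$ be an axiomatized class of representations in $Rep-K$ such that the layer $\mathfrak X_F$ is also axiomatized. Then $\mathfrak X$ is action-type axiomatized if and only if it is strictly saturated.
   Context: $K$ is a commutative ring with unit. $Rep-K$ is the variety (and category) of two-sorted algebras $(V,G)$, where $V$ is a $K$-module and $G$ a group acting on $V$ by $K$-linear maps, $a\circ g$, with $(a\circ g_1)\circ g_2=a\circ g_1g_2$ and $a\circ 1=a$; morphisms are pairs $(\alpha,\beta)$ of a module homomorphism and a group homomorphism compatible with the action. For countable sets $X,Y$, $F=F(Y)$ is the free group on $Y$ and $W=W(X,Y)=(XKF,F)$ is the free representation, where $XKF$ is the free $KF$-module on $X$ ($KF$ the group algebra). Formulas over $W$ are built from equalities $w\equiv 0$ ($w\in XKF$, action-type equalities) and $f\equiv 1$ ($f\in F$, group equalities) using $\vee,\wedge,\neg,\exists x$ ($x\in X$), $\exists y$ ($y\in Y$); a formula holds in $(V,G)$ if it is satisfied by every homomorphism $W\to (V,G)$. Action-type formulas are those built only from equalities $w\equiv 0$ using $\vee,\wedge,\neg,\exists x$, $x\in X$ (no $\exists y$ and no group equalities). A class $\mathfrak X$ is axiomatized if it is the class of all representations satisfying some set $T$ of such formulas; it is action-type axiomatized if $T$ can be taken to consist of action-type formulas. $\mathfrak X$ is saturated if $(V,G)\in\mathfrak X$ iff the corresponding faithful representation $(V,\overline G)$ (with $\overline G$ the image of $G$ in $Aut V$) is in $\mathfrak X$; right-hereditary if $(V,G)\in\mathfrak X$ implies $(V,H)\in\mathfrak X$ for every subgroup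 $H\subset G$; right-local if $(V,G)\in\mathfrak X$ whenever $(V,H)\in\mathfrak X$ for all finitely generated subgroups $H\subset G$. $\mathfrak X$ is strictly saturated if it is saturated, right-hereditary and right-local. The layer $\mathfrak X_F$ is the class of all representations $(V,F)$ in $\mathfrak X$ whose acting group is the free group $F=F(Y)$ (countable $Y$); it is regarded as a class in $Rep-KF$, the variety of $K$-representations of $F$ viewed as one-sorted algebras (morphisms $(\alpha,1)$ commuting with the $F$-action), whose logic consists of action-type formulas in which the variables from $Y$ are treated as constants. ''The layer $\mathfrak X_F$ is axiomatized'' means it is axiomatized in this logic. *)

(* Defs.v *)
From HB Require Import structures.
From Stdlib Require Import ProofIrrelevance FunctionalExtensionality List.
From mathcomp Require Import all_boot all_algebra.
Set Implicit Arguments. Unset Strict Implicit. Unset Printing Implicit Defensive.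
Import GRing.Theory.
Local Open Scope ring_scope.

Record grp := Grp {
  gcar :> Type;
  gmul : gcar -> gcar -> gcar;
  gone : gcar;
  ginv : gcar -> gcar;
  gmulA : forall a b c, gmul a (gmul b c) = gmul (gmul a b) c;
  gmul1g : forall a, gmul gone a = a;
  gmulg1 : forall a, gmul a gone = a;
  gmulVg : forall a, gmul (ginv a) a = gone;
  gmulgV : forall a, gmul a (ginv a) = gone }.


Lemma ginvM (G : grp) (a b : G) : ginv (gmul a b) = gmul (ginv b) (ginv a).
Proof.
have E : gmul (gmul a b) (gmul (ginv b) (ginv a)) = gone G.
  by rewrite gmulA -(gmulA a) gmulgV gmulg1 gmulgV.
by rewrite -[ginv _]gmulg1 -E gmulA gmulVg gmul1g.
Qed.

Definition grp_hom (G H : grp) (phi : G -> H) :=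
  forall a b, phi (gmul a b) = gmul (phi a) (phi b).

(* G is free on the family i : nat -> G (Y = nat, countable) *)
Definition free_on (G : grp) (i : nat -> G) : Prop :=
  forall (H : grp) (j : nat -> H),
    exists! phi : G -> H, grp_hom phi /\ forall y, phi (i y) = j y.

Record rep (K : comPzRingType) := Rep {
  rV : lmodType K;
  rG : grp;
  ract : rV -> rG -> rV;
  ract_lin : forall g (k : K) (a b : rV),
      ract (k *: a + b) g = k *: ract a g + ract b g;
  ract_mul : forall a g1 g2, ract (ract a g1) g2 = ract a (gmul g1 g2);
  ract_one : forall a, ract a (gone rG) = a }.

(* ---------- syntax: elements of F(Y) and of XKF as terms ---------- *)
Inductive gterm := GVar of nat | GOne | GMul of gterm & gterm | GInv of gterm.

Inductive mterm (K : Type) :=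
  MVar of nat | MZero | MAdd of mterm K & mterm K | MOpp of mterm K
| MScale of K & mterm K | MAct of mterm K & gterm.

Inductive formula (K : Type) :=
  FEqM of mterm K            (* w == 0, w in XKF *)
| FEqG of gterm              (* f == 1, f in F *)
| FOr of formula K & formula K
| FAnd of formula K & formula K
| FNot of formula K
| FExX of nat & formula K
| FExY of nat & formula K.

Fixpoint action_type (K : Type) (f : formula K) : Prop :=
  match f with
  | FEqM _ => True
  | FEqG _ => False
  | FOr f1 f2 | FAnd f1 f2 => action_type f1 /\ action_type f2
  | FNot f1 => action_type f1
  | FExX _ f1 => action_type f1
  | FExY _ _ => False
  end.

Definition upd (T : Type) (e : nat -> T) (n : nat) (v : T) : nat -> T :=
  fun m => if m == n then v else e m.

Section Semantics.
Variables (K : comPzRingType) (R : rep K).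

Fixpoint geval (ey : nat -> rG R) (t : gterm) : rG R :=
  match t with
  | GVar y => ey y
  | GOne => gone (rG R)
  | GMul a b => gmul (geval ey a) (geval ey b)
  | GInv a => ginv (geval ey a)
  end.

Fixpoint meval (ex : nat -> rV R) (ey : nat -> rG R) (t : mterm K) : rV R :=
  match t with
  | MVar x => ex x
  | MZero => 0
  | MAdd a b => meval ex ey a + meval ex ey b
  | MOpp a => - meval ex ey a
  | MScale k a => k *: meval ex ey a
  | MAct a g => ract (meval ex ey a) (geval ey g)
  end.

(* satisfaction by the homomorphism W -> (V,G) determined by (ex, ey) *)
Fixpoint sat (ex : nat -> rV R) (ey : nat -> rG R) (f : formula K) : Prop :=
  match f with
  | FEqM w => meval ex ey w = 0
  | FEqG g => geval ey g = gone (rG R)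
  | FOr f1 f2 => sat ex ey f1 \/ sat ex ey f2
  | FAnd f1 f2 => sat ex ey f1 /\ sat ex ey f2
  | FNot f1 => ~ sat ex ey f1
  | FExX x f1 => exists v, sat (upd ex x v) ey f1
  | FExY y f1 => exists g, sat ex (upd ey y g) f1
  end.

Definition holds (f : formula K) : Prop := forall ex ey, sat ex ey f.

End Semantics.

Definition rclass (K : comPzRingType) := rep K -> Prop.

Definition axiomatized (K : comPzRingType) (X : rclass K) : Prop :=
  exists T : formula K -> Prop, forall R, X R <-> (forall f, T f -> holds R f).

Definition action_axiomatized (K : comPzRingType) (X : rclass K) : Prop :=
  exists T : formula K -> Prop, (forall f, T f -> action_type f) /\
    forall R, X R <-> (forall f, T f -> holds R f).

(* The layer X_F is axiomatized in Rep-KF: a set T of action-type formulas,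
   with the variables of Y interpreted as the free generators of F, defines
   the members (V,F) of X with free acting group F = F(Y). *)
Definition layer_axiomatized (K : comPzRingType) (X : rclass K) : Prop :=
  exists T : formula K -> Prop, (forall f, T f -> action_type f) /\
    forall (R : rep K) (i : nat -> rG R), free_on i ->
      (X R <-> (forall f, T f -> forall ex, sat ex i f)).

Section Faithful.
Variables (K : comPzRingType) (R : rep K).
Let V := rV R.
Let G := rG R.

Definition fcar :=
  {p : (V -> V) * (V -> V) |
     exists g : G, p.1 = (fun a => ract a g) /\ p.2 = (fun a => ract a (ginv g))}.

Lemma fmul_proof (p q : fcar) :
  exists g : G, (fun a => (sval q).1 ((sval p).1 a),
                 fun a => (sval p).2 ((sval q).2 a)).1 = (fun a => ract a g) /\
                (fun a => (sval q).1 ((sval p).1 a),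
                 fun a => (sval p).2 ((sval q).2 a)).2 = (fun a => ract a (ginv g)).
Proof.
case: p q => [[f1 h1] [g1 [/= -> ->]]] [[f2 h2] [g2 [/= -> ->]]] /=.
exists (gmul g1 g2); split; apply: functional_extensionality => a;
  rewrite ract_mul //.
by rewrite ginvM.
Qed.

Definition fmul (p q : fcar) : fcar := exist _ (fun a => (sval q).1 ((sval p).1 a),
                 fun a => (sval p).2 ((sval q).2 a)) (fmul_proof p q).

Lemma fone_proof : exists g : G, (@id V, @id V).1 = (fun a => ract a g) /\
                                 (@id V, @id V).2 = (fun a => ract a (ginv g)).
Proof.
exists (gone G); split; apply: functional_extensionality => a /=;
  first by rewrite ract_one.
by rewrite -[ginv _]gmulg1 gmulVg ract_one.
Qed.

Definition fone : fcar := exist _ (@id V, @id V) fone_proof.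

Lemma finv_proof (p : fcar) :
  exists g : G, ((sval p).2, (sval p).1).1 = (fun a => ract a g) /\
                ((sval p).2, (sval p).1).2 = (fun a => ract a (ginv g)).
Proof.
case: p => [[f h] [g [/= -> ->]]] /=; exists (ginv g); split => //.
apply: functional_extensionality => a; congr (ract a _).
by rewrite -[ginv (ginv g)]gmul1g -(gmulgV g) -gmulA gmulgV gmulg1.
Qed.

Definition finv (p : fcar) : fcar := exist _ ((sval p).2, (sval p).1) (finv_proof p).

Lemma fcar_eq (p q : fcar) : sval p = sval q -> p = q.
Proof.
case: p q => [p Hp] [q Hq] /= E; subst q; f_equal; apply: proof_irrelevance.
Qed.

Lemma fmulA (a b c : fcar) : fmul a (fmul b c) = fmul (fmul a b) c.
Proof. by apply: fcar_eq. Qed.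
Lemma fmul1g (a : fcar) : fmul fone a = a.
Proof. by apply: fcar_eq; case: a => [[f h] ?]. Qed.
Lemma fmulg1 (a : fcar) : fmul a fone = a.
Proof. by apply: fcar_eq; case: a => [[f h] ?]. Qed.
Lemma fmulVg (a : fcar) : fmul (finv a) a = fone.
Proof.
apply: fcar_eq; case: a => [[f h] [g [/= -> ->]]] /=.
by congr pair; apply: functional_extensionality => a;
  rewrite ract_mul ?gmulgV ?gmulVg ract_one.
Qed.
Lemma fmulgV (a : fcar) : fmul a (finv a) = fone.
Proof.
apply: fcar_eq; case: a => [[f h] [g [/= -> ->]]] /=.
by congr pair; apply: functional_extensionality => a;
  rewrite ract_mul ?gmulgV ?gmulVg ract_one.
Qed.

(* G-bar: the image of G in Aut V *)
Definition Gbar : grp := Grp fmulA fmul1g fmulg1 fmulVg fmulgV.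

Definition fact (a : V) (p : Gbar) : V := (sval p).1 a.

Lemma fact_lin (p : Gbar) (k : K) (a b : V) :
  fact (k *: a + b) p = k *: fact a p + fact b p.
Proof.
case: p => [[f h] Hp]; rewrite /fact /=; case: Hp => g [/= -> _].
exact: ract_lin.
Qed.
Lemma fact_mul a (p q : Gbar) : fact (fact a p) q = fact a (gmul p q).
Proof. by []. Qed.
Lemma fact_one a : fact a (gone Gbar) = a.
Proof. by []. Qed.

Definition faithful_rep : rep K := Rep fact_lin fact_mul fact_one.
End Faithful.

Record subgroup (G : grp) := Subgroup {
  sg_mem :> G -> Prop;
  sg_one : sg_mem (gone G);
  sg_mul : forall a b, sg_mem a -> sg_mem b -> sg_mem (gmul a b);
  sg_inv : forall a, sg_mem a -> sg_mem (ginv a) }.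

Section Sub.
Variables (G : grp) (H : subgroup G).
Definition scar := {g : G | H g}.
Lemma scar_eq (a b : scar) : sval a = sval b -> a = b.
Proof. case: a b => [a Ha] [b Hb] /= E; subst b; f_equal; apply: proof_irrelevance. Qed.
Definition smul (a b : scar) : scar := exist _ _ (sg_mul (svalP a) (svalP b)).
Definition sone : scar := exist _ _ (sg_one H).
Definition sinv (a : scar) : scar := exist _ _ (sg_inv (svalP a)).
Lemma smulA a b c : smul a (smul b c) = smul (smul a b) c.
Proof. by apply: scar_eq; rewrite /= gmulA. Qed.
Lemma smul1g a : smul sone a = a. Proof. by apply: scar_eq; rewrite /= gmul1g. Qed.
Lemma smulg1 a : smul a sone = a. Proof. by apply: scar_eq; rewrite /= gmulg1. Qed.
Lemma smulVg a : smul (sinv a) a = sone. Proof. by apply: scar_eq; rewrite /= gmulVg. Qed.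
Lemma smulgV a : smul a (sinv a) = sone. Proof. by apply: scar_eq; rewrite /= gmulgV. Qed.
Definition subgrp : grp := Grp smulA smul1g smulg1 smulVg smulgV.
End Sub.

Inductive gen_by (G : grp) (l : seq G) : G -> Prop :=
| gen_in g : Stdlib.Lists.List.In g l -> gen_by l g
| gen_one : gen_by l (gone G)
| gen_mul a b : gen_by l a -> gen_by l b -> gen_by l (gmul a b)
| gen_inv a : gen_by l a -> gen_by l (ginv a).

Definition fin_gen (G : grp) (H : subgroup G) : Prop :=
  exists l : seq G, forall g, H g <-> gen_by l g.

Section SubRep.
Variables (K : comPzRingType) (R : rep K) (H : subgroup (rG R)).
Definition sact (a : rV R) (h : subgrp H) : rV R := ract a (sval h).
Lemma sact_lin (h : subgrp H) (k : K) a b :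
  sact (k *: a + b) h = k *: sact a h + sact b h.
Proof. exact: ract_lin. Qed.
Lemma sact_mul a (h1 h2 : subgrp H) : sact (sact a h1) h2 = sact a (gmul h1 h2).
Proof. exact: ract_mul. Qed.
Lemma sact_one a : sact a (gone (subgrp H)) = a.
Proof. exact: ract_one. Qed.
Definition sub_rep : rep K := Rep sact_lin sact_mul sact_one.
End SubRep.

Definition saturated (K : comPzRingType) (X : rclass K) : Prop :=
  forall R : rep K, X R <-> X (faithful_rep R).

Definition right_hereditary (K : comPzRingType) (X : rclass K) : Prop :=
  forall (R : rep K) (H : subgroup (rG R)), X R -> X (sub_rep H).

Definition right_local (K : comPzRingType) (X : rclass K) : Prop :=
  forall R : rep K,
    (forall H : subgroup (rG R), fin_gen H -> X (sub_rep H)) -> X R.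

Definition strictly_saturated (K : comPzRingType) (X : rclass K) : Prop :=
  saturated X /\ right_hereditary X /\ right_local X.

(* Main.v *)
Require Import Defs.
From mathcomp Require Import all_boot all_algebra.
From Stdlib Require Import ProofIrrelevance FunctionalExtensionality ClassicalEpsilon.
From Stdlib Require List.
Set Implicit Arguments. Unset Strict Implicit. Unset Printing Implicit Defensive.
Import GRing.Theory.


Lemma hom_one (G H : grp) (phi : G -> H) : grp_hom phi -> phi (gone G) = gone H.
Proof.
move=> Hp.
have E : phi (gone G) = gmul (phi (gone G)) (phi (gone G)) by rewrite -Hp gmul1g.
transitivity (gmul (gmul (ginv (phi (gone G))) (phi (gone G))) (phi (gone G))).
  by rewrite gmulVg gmul1g.
by rewrite -gmulA -E gmulVg.
Qed.

Lemma hom_inv (G H : grp) (phi : G -> H) a : grp_hom phi -> phi (ginv a) = ginv (phi a).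
Proof.
move=> Hp.
have E : gmul (phi (ginv a)) (phi a) = gone H by rewrite -Hp gmulVg hom_one.
by rewrite -[phi (ginv a)]gmulg1 -(gmulgV (phi a)) gmulA E gmul1g.
Qed.

Definition letter := (nat * bool)%type.
Definition linv (l : letter) : letter := (l.1, ~~ l.2).
Lemma linvK l : linv (linv l) = l. Proof. by case: l => n []. Qed.
Definition push (s : seq letter) (l : letter) : seq letter :=
  if s is a :: s' then (if a == linv l then s' else l :: s) else [:: l].
Fixpoint red (s : seq letter) : bool :=
  match s with
  | a :: s' => match s' with b :: _ => (b != linv a) && red s' | [::] => true end
  | [::] => true end.

Lemma red_tail a s : red (a :: s) -> red s.
Proof. by case: s => // b s /andP[]. Qed.

Lemma push_red s l : red (l :: s) -> push s l = l :: s.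
Proof. case: s => // a s /andP[H _]; by rewrite /push (negbTE H). Qed.

Lemma red_push s l : red s -> red (push s l).
Proof.
case: s => [|a s] Hs //; rewrite /push; case: eqP => Ha.
  exact: red_tail Hs.
by apply/andP; split => //; apply/eqP.
Qed.

Lemma red_fold s w : red s -> red (foldl push s w).
Proof. elim: w s => [|a w IH] s Hs //=; apply: IH; exact: red_push. Qed.

Lemma push_cancel y l : red y -> push (push y l) (linv l) = y.
Proof.
case: y => [|a y] Hy; first by rewrite /push linvK eqxx.
case: (eqVneq a (linv l)) => Ha.
  subst a; rewrite /push eqxx; case: y Hy => [|b y] Hy //.
  case: (eqVneq b (linv (linv l))) => // Eb; subst b; move: Hy => /andP[]; by rewrite linvK eqxx.
by rewrite /push (negbTE Ha) linvK eqxx.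
Qed.

Lemma fold_rev_push s t l : red s ->
  foldl push s (rev (push t l)) = push (foldl push s (rev t)) l.
Proof.
case: t => [|a t] Hs; first by [].
case: (eqVneq a (linv l)) => Ha.
  subst a; rewrite [push (_ :: t) l]/push eqxx rev_cons foldl_rcons.
  have := push_cancel (linv l) (red_fold (rev t) Hs); by rewrite linvK.
by rewrite [push (_ :: t) l]/push (negbTE Ha) [rev (l :: _)]rev_cons foldl_rcons.
Qed.

Lemma fold_assoc s w t : red s ->
  foldl push s (rev (foldl push t w)) = foldl push (foldl push s (rev t)) w.
Proof.
elim: w t => [|a w IH] t Hs //=; by rewrite IH // fold_rev_push.
Qed.

Lemma fold_inv_self s : red s -> foldl push s (map linv s) = [::].
Proof.
elim: s => [|a s IH] Hs //=; rewrite linvK eqxx; exact: IH (red_tail Hs).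
Qed.

Lemma fold_inv_word z s : red z -> foldl push z (map linv s ++ rev s) = z.
Proof.
elim: s z => [|a s IH] z Hz //=.
rewrite rev_cons -cats1 catA foldl_cat IH ?red_push //=.
have := push_cancel (linv a) Hz; by rewrite linvK.
Qed.

Lemma fold_nil_rev s : red s -> foldl push [::] (rev s) = s.
Proof.
elim: s => [|a s IH] Hs //; rewrite rev_cons foldl_rcons IH ?(red_tail Hs) //.
exact: push_red.
Qed.

Definition fgcar := {s : seq letter | red s}.
Lemma fg_eq (a b : fgcar) : sval a = sval b -> a = b.
Proof. case: a b => [a Ha] [b Hb] /= E; subst b; f_equal; apply: bool_irrelevance. Qed.
Definition fgmul (a b : fgcar) : fgcar :=
  exist _ (foldl push (sval a) (rev (sval b))) (@red_fold _ _ (svalP a)).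
Definition fgone : fgcar := exist _ [::] isT.
Definition fginv (a : fgcar) : fgcar :=
  exist _ (foldl push [::] (map linv (sval a))) (@red_fold [::] _ isT).
Lemma fgmulA a b c : fgmul a (fgmul b c) = fgmul (fgmul a b) c.
Proof. apply: fg_eq => /=; exact: fold_assoc (svalP a). Qed.
Lemma fgmul1g a : fgmul fgone a = a.
Proof. apply: fg_eq => /=; exact: fold_nil_rev (svalP a). Qed.
Lemma fgmulg1 a : fgmul a fgone = a.
Proof. by apply: fg_eq. Qed.
Lemma fgmulVg a : fgmul (fginv a) a = fgone.
Proof. apply: fg_eq => /=; by rewrite -foldl_cat fold_inv_word. Qed.
Lemma fgmulgV a : fgmul a (fginv a) = fgone.
Proof.
apply: fg_eq => /=; rewrite fold_assoc ?(svalP a) //=; exact: fold_inv_self (svalP a).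
Qed.
Definition FG : grp := Grp fgmulA fgmul1g fgmulg1 fgmulVg fgmulgV.
Definition fgen (y : nat) : FG := exist _ [:: (y, true)] isT.

Section Eval.
Variables (H : grp) (j : nat -> H).
Definition ev (l : letter) : H := if l.2 then j l.1 else ginv (j l.1).
Fixpoint evs (s : seq letter) : H :=
  if s is a :: s' then gmul (evs s') (ev a) else gone H.
Lemma ev_linv l : gmul (ev (linv l)) (ev l) = gone H.
Proof. case: l => n [] /=; by rewrite /ev /= ?gmulVg ?gmulgV. Qed.
Lemma evs_push s l : evs (push s l) = gmul (evs s) (ev l).
Proof.
case: s => [|a s] /=; first by rewrite gmul1g.
case: eqP => Ha //=; subst a; by rewrite -gmulA ev_linv gmulg1.
Qed.
Lemma evs_fold s t : evs (foldl push s (rev t)) = gmul (evs s) (evs t).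
Proof.
elim: t s => [|a t IH] s /=; first by rewrite gmulg1.
by rewrite rev_cons foldl_rcons evs_push IH gmulA.
Qed.
Definition fgeval (w : FG) : H := evs (sval w).
Lemma fgeval_hom : grp_hom fgeval.
Proof. move=> a b; exact: evs_fold. Qed.
Lemma fgeval_gen y : fgeval (fgen y) = j y.
Proof. by rewrite /fgeval /= /ev /= gmul1g. Qed.
End Eval.

Lemma FG_free : free_on fgen.
Proof.
move=> H j; exists (fgeval j); split; first by split; [exact: fgeval_hom|exact: fgeval_gen].
move=> psi [Hpsi Hgen]; apply: functional_extensionality => -[s Hs].
elim: s Hs => [|a s IH] Hs.
  rewrite /fgeval /= -(hom_one Hpsi); congr psi; exact: fg_eq.
have -> : (exist _ (a :: s) Hs : FG) = gmul (exist _ s (red_tail Hs) : FG) (exist _ [:: a] isT : FG).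
  by apply: fg_eq => /=; rewrite push_red.
rewrite Hpsi -IH /fgeval /= push_red //=; f_equal.
case: a Hs => n [] Hs; first by rewrite /ev /= -Hgen.
transitivity (psi (ginv (fgen n))); last by congr psi; apply: fg_eq.
by rewrite hom_inv // Hgen.
Qed.

Local Open Scope ring_scope.

Section Sem.
Variable K : comPzRingType.

Lemma upd_comp (A B : Type) (h : A -> B) (e : nat -> A) x v :
  (fun n => h (upd e x v n)) = upd (fun n => h (e n)) x (h v).
Proof. apply: functional_extensionality => n; rewrite /upd; by case: eqP. Qed.

Lemma geval_map (R1 R2 : rep K) (b : rG R1 -> rG R2) (Hb : grp_hom b) ey g :
  geval (R:=R2) (fun n => b (ey n)) g = b (geval (R:=R1) ey g).
Proof.
elim: g => [y|||g IH] //=; first by rewrite hom_one.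
  by move=> g1 IH1 g2 IH2; rewrite IH1 IH2 Hb.
by rewrite IH hom_inv.
Qed.

Section Map.
Variables (R1 R2 : rep K) (a : rV R1 -> rV R2) (b : rG R1 -> rG R2).
Hypotheses (Hb : grp_hom b) (a0 : a 0 = 0) (aD : forall u v, a (u + v) = a u + a v)
  (aN : forall u, a (- u) = - a u) (aZ : forall k u, a (k *: u) = k *: a u)
  (aact : forall u g, a (ract u g) = ract (a u) (b g)).

Lemma meval_map ex ey t :
  meval (R:=R2) (fun n => a (ex n)) (fun n => b (ey n)) t = a (meval (R:=R1) ex ey t).
Proof.
elim: t => [x||t1 IH1 t2 IH2|t IH|k t IH|t IH g] //=.
- by rewrite IH1 IH2.
- by rewrite IH.
- by rewrite IH.
- by rewrite IH geval_map.
Qed.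

Hypotheses (ainj : injective a) (asurj : forall v, exists u, a u = v).

Lemma sat_act f ex ey : action_type f ->
  sat (R:=R2) (fun n => a (ex n)) (fun n => b (ey n)) f <-> sat (R:=R1) ex ey f.
Proof.
elim: f ex => [w|g|f1 IH1 f2 IH2|f1 IH1 f2 IH2|f1 IH1|x f1 IH1|y f1 IH1] ex //= Hf.
- rewrite meval_map; split; last by move=> ->.
  by move=> E; apply: ainj; rewrite E a0.
- case: Hf => H1 H2; rewrite IH1 // IH2 //.
- case: Hf => H1 H2; rewrite IH1 // IH2 //.
- by rewrite IH1.
- split.
    move=> [v Hv]; have [u Hu] := asurj v; exists u; apply/IH1 => //.
    by rewrite upd_comp Hu.
  move=> [u Hu]; exists (a u); rewrite -upd_comp; exact/IH1.
Qed.

Hypotheses (binj : injective b) (bsurj : forall v, exists u, b u = v).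

Lemma sat_iso f ex ey :
  sat (R:=R2) (fun n => a (ex n)) (fun n => b (ey n)) f <-> sat (R:=R1) ex ey f.
Proof.
elim: f ex ey => [w|g|f1 IH1 f2 IH2|f1 IH1 f2 IH2|f1 IH1|x f1 IH1|y f1 IH1] ex ey //=.
- rewrite meval_map; split; last by move=> ->.
  by move=> E; apply: ainj; rewrite E a0.
- rewrite geval_map //; split; last by move=> ->; rewrite hom_one.
  by move=> E; apply: binj; rewrite E hom_one.
- by rewrite IH1 IH2.
- by rewrite IH1 IH2.
- by rewrite IH1.
- split.
    move=> [v Hv]; have [u Hu] := asurj v; exists u; apply/IH1.
    by rewrite upd_comp Hu.
  move=> [u Hu]; exists (a u); rewrite -upd_comp; exact/IH1.
- split.
    move=> [v Hv]; have [u Hu] := bsurj v; exists u; apply/IH1.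
    by rewrite upd_comp Hu.
  move=> [u Hu]; exists (b u); rewrite -upd_comp; exact/IH1.
Qed.

Lemma holds_iso f : holds R1 f <-> holds R2 f.
Proof.
split => H ex ey.
  pose ex1 n := proj1_sig (constructive_indefinite_description _ (asurj (ex n))).
  pose ey1 n := proj1_sig (constructive_indefinite_description _ (bsurj (ey n))).
  have -> : ex = fun n => a (ex1 n).
    apply: functional_extensionality => n.
    by rewrite /ex1; case: constructive_indefinite_description.
  have -> : ey = fun n => b (ey1 n).
    apply: functional_extensionality => n.
    by rewrite /ey1; case: constructive_indefinite_description.
  exact/sat_iso.
exact/sat_iso.
Qed.
End Map.

Fixpoint gvars (g : gterm) : list nat :=
  match g with GVar y => [:: y] | GOne => [::] | GMul a b => gvars a ++ gvars b
  | GInv a => gvars a end.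
Fixpoint mvars (t : mterm K) : list nat :=
  match t with MVar _ | MZero => [::] | MAdd a b => mvars a ++ mvars b
  | MOpp a | MScale _ a => mvars a | MAct a g => mvars a ++ gvars g end.
Fixpoint fvars (f : formula K) : list nat :=
  match f with FEqM w => mvars w | FEqG g => gvars g
  | FOr a b | FAnd a b => fvars a ++ fvars b
  | FNot a | FExX _ a | FExY _ a => fvars a end.

Lemma geval_vars (R : rep K) (e1 e2 : nat -> rG R) g :
  (forall y, List.In y (gvars g) -> e1 y = e2 y) -> geval e1 g = geval e2 g.
Proof.
elim: g => [y|||g IH] //= => [E|g1 IH1 g2 IH2 E|E].
- by apply: E; left.
- by rewrite IH1 ?IH2 // => y Hy; apply: E; apply: List.in_or_app; [right|left].
- by rewrite IH.
Qed.

Lemma meval_vars (R : rep K) ex (e1 e2 : nat -> rG R) t :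
  (forall y, List.In y (mvars t) -> e1 y = e2 y) -> meval ex e1 t = meval ex e2 t.
Proof.
elim: t => [x||t1 IH1 t2 IH2|t IH|k t IH|t IH g] //= E.
- by rewrite IH1 ?IH2 // => y Hy; apply: E; apply: List.in_or_app; [right|left].
- by rewrite IH.
- by rewrite IH.
- rewrite IH ?(geval_vars (e1:=e1) (e2:=e2)) // => y Hy; apply: E;
   apply: List.in_or_app; [right|left] => //.
Qed.

Lemma sat_vars (R : rep K) f : forall ex (e1 e2 : nat -> rG R),
  (forall y, List.In y (fvars f) -> e1 y = e2 y) -> sat ex e1 f <-> sat ex e2 f.
Proof.
have L : forall (l1 l2 : list nat) (P : nat -> Prop), (forall y, List.In y (l1 ++ l2) -> P y) ->
   (forall y, List.In y l1 -> P y) /\ (forall y, List.In y l2 -> P y).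
  by move=> l1 l2 P H; split => y Hy; apply: H; apply: List.in_or_app; [left|right].
elim: f => [w|g|f1 IH1 f2 IH2|f1 IH1 f2 IH2|f1 IH1|x f1 IH1|y f1 IH1] ex e1 e2 E.
- by rewrite /= (@meval_vars R ex e1 e2 w E).
- by rewrite /= (geval_vars E).
- case: (L _ _ _ E) => E1 E2; rewrite /=; rewrite (IH1 ex e1 e2 E1) (IH2 ex e1 e2 E2); exact: iff_refl.
- case: (L _ _ _ E) => E1 E2; rewrite /=; rewrite (IH1 ex e1 e2 E1) (IH2 ex e1 e2 E2); exact: iff_refl.
- rewrite /=; rewrite (IH1 ex e1 e2 E); exact: iff_refl.
- rewrite /=; split => -[v Hv]; exists v; move: Hv; apply IH1 => //.
  by move=> z Hz; symmetry; apply: E.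
- rewrite /=; split => -[v Hv]; exists v; move: Hv; apply IH1 => z Hz; rewrite /upd; case: eqP => // _.
    by symmetry; apply: E.
  exact: E.
Qed.
End Sem.

Local Open Scope ring_scope.

Lemma id_inj (V : Type) : injective (fun u : V => u).
Proof. by move=> x y. Qed.
Lemma id_surj (V : Type) : forall v : V, exists u : V, u = v.
Proof. by move=> v; exists v. Qed.

Section Main.
Variable K : comPzRingType.

Definition img (R : rep K) (g : rG R) : Gbar R :=
  exist _ (fun a => ract a g, fun a => ract a (ginv g)) (ex_intro _ g (conj erefl erefl)) : fcar R.

Lemma img_hom (R : rep K) : grp_hom (@img R).
Proof.
move=> g h; apply: fcar_eq => /=; congr pair; apply: functional_extensionality => a;
  by rewrite ract_mul // ginvM.
Qed.

Lemma img_surj (R : rep K) (p : Gbar R) : exists g, img g = p.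
Proof.
case: p => [[f h] [g [/= Ef Eh]]]; exists g; apply: fcar_eq; by rewrite /= Ef Eh.
Qed.

Lemma act_to_ss (X : rclass K) : action_axiomatized X -> strictly_saturated X.
Proof.
move=> [T [HT HX]]; split; [|split].
- move=> R; rewrite !HX; split => H f Tf ex ey.
    pose ey1 n := proj1_sig (constructive_indefinite_description _ (img_surj (ey n))).
    have -> : ey = fun n => img (ey1 n).
      apply: functional_extensionality => n.
      by rewrite /ey1; case: constructive_indefinite_description.
    apply/(@sat_act K R (faithful_rep R) (fun u => u) (@img R) (@img_hom R) erefl
      (fun _ _ => erefl) (fun _ => erefl) (fun _ _ => erefl) (fun _ _ => erefl)
      (@id_inj _) (@id_surj _)); first exact: HT.
    exact: H.
  apply/(@sat_act K R (faithful_rep R) (fun u => u) (@img R) (@img_hom R) erefl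
      (fun _ _ => erefl) (fun _ => erefl) (fun _ _ => erefl) (fun _ _ => erefl)
      (@id_inj _) (@id_surj _)); first exact: HT.
  exact: H.
- move=> R Hs; rewrite !HX => H f Tf ex ey.
  apply/(@sat_act K (sub_rep Hs) R (fun u => u) (fun h => sval h) (fun _ _ => erefl) erefl
      (fun _ _ => erefl) (fun _ => erefl) (fun _ _ => erefl) (fun _ _ => erefl)
      (@id_inj _) (@id_surj _)); first exact: HT.
  exact: H.
- move=> R Hloc; rewrite HX => f Tf ex ey0.
  pose l := List.map ey0 (fvars f).
  pose Hs := @Subgroup (rG R) (gen_by l) (gen_one l) (@gen_mul _ l) (@gen_inv _ l).
  have XH : X (sub_rep Hs) by apply: Hloc; exists l.
  move: XH; rewrite HX => XH.
  pose eyH n : subgrp Hs := match excluded_middle_informative (gen_by l (ey0 n)) with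
     | left p => exist _ (ey0 n) p | right _ => sone Hs end.
  have := XH f Tf ex eyH.
  move/(@sat_act K (sub_rep Hs) R (fun u => u) (fun h => sval h) (fun _ _ => erefl) erefl
      (fun _ _ => erefl) (fun _ => erefl) (fun _ _ => erefl) (fun _ _ => erefl)
      (@id_inj _) (@id_surj _) _ ex eyH (HT f Tf)).
  have E : forall y, List.In y (fvars f) -> ey0 y = sval (eyH y).
    move=> y Hy; rewrite /eyH.
    case: excluded_middle_informative => // Hn; exfalso; apply: Hn.
    by apply: gen_in; apply: List.in_map.
  move=> Hsat; exact: ((@sat_vars K R f ex ey0 _ E).2 Hsat).
Qed.
End Main.

Local Open Scope ring_scope.

Section PB.
Variables (K : comPzRingType) (R : rep K) (G0 : grp) (phi : G0 -> rG R) (Hphi : grp_hom phi).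
Definition pact (a : rV R) (g : G0) : rV R := ract a (phi g).
Lemma pact_lin g (k : K) (a b : rV R) : pact (k *: a + b) g = k *: pact a g + pact b g.
Proof. exact: ract_lin. Qed.
Lemma pact_mul a g1 g2 : pact (pact a g1) g2 = pact a (gmul g1 g2).
Proof. by rewrite /pact ract_mul Hphi. Qed.
Lemma pact_one a : pact a (gone G0) = a.
Proof. by rewrite /pact hom_one // ract_one. Qed.
Definition pb : rep K := Rep pact_lin pact_mul pact_one.

Hypothesis phi_surj : forall g, exists w, phi w = g.

Lemma beta_proof (p : Gbar pb) : exists g : rG R,
  (sval p).1 = (fun a : rV R => ract a g) /\ (sval p).2 = (fun a : rV R => ract a (ginv g)).
Proof.
case: p => [[f h] [w [/= -> ->]]]; exists (phi w); split => //=.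
by rewrite /pact (hom_inv _ Hphi).
Qed.
Definition beta (p : Gbar pb) : Gbar R := exist _ (sval p) (beta_proof p).

Lemma beta_hom : grp_hom beta.
Proof. by move=> p q; apply: fcar_eq. Qed.
Lemma beta_inj : injective beta.
Proof. move=> p q E; apply: fcar_eq; exact: (f_equal sval E). Qed.
Lemma beta_surj (q : Gbar R) : exists p, beta p = q.
Proof.
case: q => [[f h] Hq]; have := Hq; move=> [g [/= Ef Eh]].
have [w Hw] := phi_surj g.
have P : exists w : G0, (f, h).1 = (fun a => pact a w) /\ (f, h).2 = (fun a => pact a (ginv w)).
  by exists w; rewrite /pact (hom_inv _ Hphi) Hw.
by exists (exist _ (f, h) P : fcar pb); apply: fcar_eq.
Qed.

Lemma PB (X : rclass K) : axiomatized X -> saturated X -> (X R <-> X pb).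
Proof.
move=> [T HX] S; rewrite (S R) (S pb) !HX.
have I := (@holds_iso K (faithful_rep pb) (faithful_rep R) (fun u => u) beta beta_hom erefl
      (fun _ _ => erefl) (fun _ => erefl) (fun _ _ => erefl) (fun _ _ => erefl)
      (@id_inj _) (@id_surj _) beta_inj beta_surj).
split => H f Tf; have := H f Tf; [exact: (proj2 (I f)) | exact: (proj1 (I f))].
Qed.
End PB.

Lemma nth_gen (G : grp) (l : seq G) n : gen_by l (List.nth n l (gone G)).
Proof.
case: (PeanoNat.Nat.lt_ge_cases n (length l)) => H.
  by apply: gen_in; apply: List.nth_In.
rewrite List.nth_overflow //; exact: gen_one.
Qed.

Lemma ss_to_act (K : comPzRingType) (X : rclass K) :
  axiomatized X -> layer_axiomatized X -> strictly_saturated X -> action_axiomatized X.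
Proof.
move=> A [T [HT HL]] [S [Her Loc]]; exists T; split => // R; split.
- move=> XR f Tf ex ey.
  pose phi := fgeval ey; have Hphi : grp_hom phi := fgeval_hom ey.
  have p1 : exists w, phi w = gone (rG R) by exists (gone FG).
  have p2 : forall a b, (exists w, phi w = a) -> (exists w, phi w = b) -> exists w, phi w = gmul a b.
    by move=> a b [w1 <-] [w2 <-]; exists (gmul w1 w2); rewrite Hphi.
  have p3 : forall a, (exists w, phi w = a) -> exists w, phi w = ginv a.
    by move=> a [w <-]; exists (ginv w); rewrite (hom_inv _ Hphi).
  pose Hs := @Subgroup (rG R) (fun g => exists w, phi w = g) p1 p2 p3.
  pose phi' (w : FG) : subgrp Hs := exist _ (phi w) (ex_intro _ w erefl).
  have Hphi' : grp_hom phi' by move=> u v; apply: scar_eq; exact: Hphi.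
  have Hsurj : forall g : subgrp Hs, exists w, phi' w = g.
    by move=> [g [w Hw]]; exists w; apply: scar_eq.
  pose P := @pb K (sub_rep Hs) FG phi' Hphi'.
  have XP : X P by apply/(@PB K (sub_rep Hs) FG phi' Hphi' Hsurj X A S); exact: Her.
  have := (HL P fgen FG_free).1 XP f Tf ex.
  move/(@sat_act K P R (fun u => u) phi Hphi erefl
      (fun _ _ => erefl) (fun _ => erefl) (fun _ _ => erefl) (fun _ _ => erefl)
      (@id_inj _) (@id_surj _) _ ex fgen (HT f Tf)).
  have -> // : (fun n => phi (fgen n)) = ey.
  by apply: functional_extensionality => n; rewrite /phi fgeval_gen.
- move=> H; apply: Loc => Hs [l Hl].
  pose j n : subgrp Hs := exist _ (List.nth n l (gone _)) ((Hl _).2 (nth_gen l n)).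
  pose phi := fgeval j; have Hphi : grp_hom phi := fgeval_hom j.
  have Hsurj : forall g : subgrp Hs, exists w, phi w = g.
    move=> [g Hg]; have : gen_by l g by apply/Hl.
    suff: forall g, gen_by l g -> exists w, sval (phi w) = g.
      by move=> Hx /Hx [w Hw]; exists w; apply: scar_eq.
    move=> {Hg} g; elim => {g}.
    + move=> g Hin; have [n [_ Hn]] := List.In_nth l g (gone _) Hin.
      by exists (fgen n); rewrite /phi fgeval_gen.
    + by exists (gone FG).
    + by move=> a b _ [w1 <-] _ [w2 <-]; exists (gmul w1 w2); rewrite Hphi.
    + by move=> a _ [w <-]; exists (ginv w); rewrite (hom_inv _ Hphi).
  pose P := @pb K (sub_rep Hs) FG phi Hphi.
  apply/(@PB K (sub_rep Hs) FG phi Hphi Hsurj X A S).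
  apply/(HL P fgen FG_free) => f Tf ex.
  have Hb : grp_hom (fun w => sval (phi w)) by move=> u v; rewrite /= Hphi.
  apply/(@sat_act K P R (fun u => u) (fun w => sval (phi w)) Hb erefl
      (fun _ _ => erefl) (fun _ => erefl) (fun _ _ => erefl) (fun _ _ => erefl)
      (@id_inj _) (@id_surj _) _ ex fgen (HT f Tf)).
  exact: H.
Qed.

Theorem theorem3p2 (K : comPzRingType) (X : rclass K) :
  axiomatized X -> layer_axiomatized X ->
  (action_axiomatized X <-> strictly_saturated X).
Proof.
move=> A L; split; [exact: act_to_ss | exact: ss_to_act].
Qed.
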